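(* Let $S$ be a finite set of points in the plane, let $\mathcal D$ be a set of $k$ pairwise non-opposite directions such that $S$ is in $\mathcal D$-general position, and let $T$ be a $\mathcal D$-monotone geometric spanning tree of $S$. Then the maximum degree of $T$ is at most $2k$.
   Context: A direction is a unit vector in $\mathbb{R}^2$; two directions $d,d'$ are opposite if $d'=-d$. A finite point set $S$ is in $d$-general position if no two points of $S$ lie on a common line orthogonal to $d$; $S$ is in $\mathcal D$-general position if it is in $d$-general position for every $d\in\mathcal D$. A geometric path $\langle p_1,\dots,p_r\rangle$ is $d$-monotone if its vertex set is in $d$-general position and $\langle p_1,d\rangle,\dots,\langle p_r,d\rangle$ is strictly increasing or strictly decreasing. A geometric spanning tree of $S$ is a tree with vertex set $S$ whose edges are straight segments. Given a finite set $\mathcal D$ of pairwise non-opposite directions, a geometric spanning tree $T$ of $S$ is $\mathcal D$-monotone if for every pair of vertices $u,v$ there is $d\in\mathcal D$ such that the unique path of $T$ from $u$ to $v$ is $d$-monotone. *)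

(* Defs.v *)
From HB Require Import structures.
From mathcomp Require Import all_boot all_order all_algebra.
Set Implicit Arguments. Unset Strict Implicit. Unset Printing Implicit Defensive.
Import Order.TTheory GRing.Theory Num.Theory.
Local Open Scope ring_scope.

Section Geometry.
Variable R : realFieldType.

Definition pt := (R * R)%type.

Definition dotp (p d : pt) : R := p.1 * d.1 + p.2 * d.2.

Definition is_direction (d : pt) : Prop := d.1 ^+ 2 + d.2 ^+ 2 = 1.

Definition opposite (d d' : pt) : Prop := d' = (- d.1, - d.2).

Definition pairwise_non_opposite (D : seq pt) : Prop :=
  {in D &, forall d d', ~ opposite d d'}.

Definition d_general_position (d : pt) (S : seq pt) : Prop :=
  {in S &, forall p q, dotp p d = dotp q d -> p = q}.

Definition D_general_position (D : seq pt) (S : seq pt) : Prop :=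
  forall d, d \in D -> d_general_position d S.

Definition d_monotone (d : pt) (s : seq pt) : Prop :=
  d_general_position d s /\
  (sorted <%R (map (dotp ^~ d) s) \/ sorted >%R (map (dotp ^~ d) s)).

(* A geometric graph on the vertex set S, given by its adjacency relation E
   (an edge uv is the straight segment between u and v). *)
Definition graph_on (S : seq pt) (E : rel pt) : Prop :=
  [/\ forall u v, E u v -> (u \in S) && (v \in S),
      forall u v, E u v = E v u &
      forall u, ~~ E u u].

Definition simple_path (E : rel pt) (u v : pt) (p : seq pt) : Prop :=
  [/\ path E u p, last u p = v & uniq (u :: p)].

Definition connected_on (S : seq pt) (E : rel pt) : Prop :=
  {in S &, forall u v, exists p, path E u p /\ last u p = v}.

Definition acyclic (E : rel pt) : Prop :=
  forall u p, uniq (u :: p) -> (2 <= size p)%N -> path E u p -> ~~ E (last u p) u.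

Definition spanning_tree (S : seq pt) (E : rel pt) : Prop :=
  [/\ graph_on S E, connected_on S E & acyclic E].

Definition D_monotone_tree (D S : seq pt) (E : rel pt) : Prop :=
  spanning_tree S E /\
  {in S &, forall u v, u != v -> forall p, simple_path E u v p ->
     exists2 d, d \in D & d_monotone d (u :: p)}.

Definition degree (S : seq pt) (E : rel pt) (v : pt) : nat := count (E v) S.

End Geometry.

(* Main.v *)
Require Import Defs.
From HB Require Import structures.
From mathcomp Require Import all_boot all_order all_algebra ring lra.
Import Order.TTheory GRing.Theory Num.Theory.
Local Open Scope ring_scope.

Section S.
Variable R : realFieldType.
Definition cross (x y : pt R) : R := x.1 * y.2 - x.2 * y.1.

Lemma ident (u u' b d : pt R) :
  dotp u' d * dotp u b = dotp u d * dotp u' b + cross u u' * cross b d.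
Proof. rewrite /dotp /cross; ring. Qed.

Lemma L1 {u u' b : pt R} (d : pt R) : 0 < dotp u b -> 0 < dotp u' b -> 0 < cross u u' ->
  0 < dotp u d * cross b d -> 0 < dotp u' d * cross b d.
Proof.
move=> h1 h2 h3 h4.
have e := ident u u' b d.
have : 0 < dotp u' d * cross b d * dotp u b.
  have -> : dotp u' d * cross b d * dotp u b = (dotp u d * cross b d) * dotp u' b + cross u u' * (cross b d)^+2.
    by rewrite /dotp /cross; ring.
  have := mulr_gt0 h4 h2.
  have : 0 <= cross u u' * (cross b d)^+2 by apply: mulr_ge0; [exact: ltW|exact: sqr_ge0].
  lra.
by rewrite pmulr_lgt0.
Qed.

Lemma L2 (u u' b d : pt R) : 0 < dotp u b -> 0 < dotp u' b -> 0 < cross u u' ->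
  dotp u d * dotp u' d < 0 -> ~~ (0 < dotp u d * cross b d) && (0 < dotp u' d * cross b d).
Proof.
move=> h1 h2 h3 h4.
have e := ident u u' b d.
have mon := @L1 u u' b d h1 h2 h3.
set x := dotp u d in h4 e mon *; set y := dotp u' d in h4 e mon *; set c := cross b d in e mon *.
set p := dotp u b in h1 e mon *; set q := dotp u' b in h2 e mon *; set r := cross u u' in h3 e mon *.
have key : forall X Y : R, X * c * (Y * c) = (X * Y) * c ^+ 2 by move=> X Y; ring.
have c2 := sqr_ge0 c.
apply/andP; split.
  apply/negP => hx. have hy := mon hx.
  have := mulr_gt0 hx hy. rewrite key.
  have : x * y * c ^+ 2 <= 0 by apply: mulr_le0_ge0 => //; exact: ltW.
  lra.
rewrite ltNge; apply/negP => hy.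
have e2 : y * c * p - x * c * q = r * c ^+ 2.
  rewrite expr2. have -> : y * c * p = (y * p) * c by ring.
  rewrite e; ring.
have hr : 0 <= r * c ^+ 2 by apply: mulr_ge0 => //; exact: ltW.
have hyp : y * c * p <= 0 by apply: mulr_le0_ge0 => //; exact: ltW.
have hxq : x * c * q <= 0 by lra.
have hx : x * c <= 0.
  rewrite leNgt; apply/negP => hx; have := mulr_gt0 hx h2; lra.
have := mulr_le0 hx hy. rewrite key => hxy.
have hc2 : c ^+ 2 <= 0.
  rewrite leNgt; apply/negP => hc. have : x * y * c ^+ 2 < 0 by rewrite pmulr_llt0. lra.
have c0 : c = 0 by apply/eqP; rewrite -sqrf_eq0 eq_le hc2 c2.
rewrite c0 mulr0 addr0 in e.
have : x * y * p < 0 by rewrite pmulr_llt0.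
have -> : x * y * p = x * x * q by rewrite -mulrA e; ring.
have := mulr_ge0 (sqr_ge0 x) (ltW h2). rewrite expr2. lra.
Qed.

Lemma L3 (u u' b d : pt R) : 0 < dotp u b -> 0 < dotp u' b -> cross u u' = 0 ->
  ~ (dotp u d * dotp u' d < 0).
Proof.
move=> h1 h2 h3 h4.
have e := ident u u' b d. rewrite h3 mul0r addr0 in e.
set x := dotp u d in h4 e *; set y := dotp u' d in h4 e *.
set p := dotp u b in h1 e *; set q := dotp u' b in h2 e *.
have : x * y * p < 0 by rewrite pmulr_llt0.
have -> : x * y * p = x * x * q by rewrite -mulrA e; ring.
have := mulr_ge0 (sqr_ge0 x) (ltW h2). rewrite expr2. lra.
Qed.

Definition vec (v w : pt R) : pt R := (w.1 - v.1, w.2 - v.2).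

Lemma dot_vec v w d : dotp (vec v w) d = dotp w d - dotp v d.
Proof. rewrite /dotp /vec /=; ring. Qed.

Lemma count_le (T : eqType) (P Q : pred T) (s : seq T) :
  {in s, forall x, P x -> Q x} -> (count P s <= count Q s)%N.
Proof.
elim: s => [|y s IH] hPQ //=.
apply: leq_add; last by apply: IH => z hz; apply: hPQ; rewrite inE hz orbT.
case hy: (P y) => //. by rewrite (hPQ y) // mem_head.
Qed.

Lemma count_lt (T : eqType) (P Q : pred T) (s : seq T) :
  {in s, forall x, P x -> Q x} -> (exists2 x, x \in s & Q x && ~~ P x) ->
  (count P s < count Q s)%N.
Proof.
elim: s => [|y s IH] hPQ [x]; first by [].
rewrite inE => /orP [/eqP -> | hx] /andP [hQ hP] /=.
  rewrite (negbTE hP) hQ add0n add1n ltnS.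
  apply: count_le => z hz; apply: hPQ; by rewrite inE hz orbT.
have hle : (P y <= Q y)%N.
  case hy: (P y) => //. by rewrite (hPQ y) // mem_head.
rewrite -addnS; apply: leq_add => //. apply: IH; last by exists x => //; rewrite hQ.
move=> z hz; apply: hPQ; by rewrite inE hz orbT.
Qed.

Lemma half (v b a : pt R) (D L : seq (pt R)) : uniq L ->
  (forall w, w \in L -> 0 < dotp (vec v w) b) ->
  {in L &, forall w w', w != w' ->
     exists2 d, d \in D & dotp (vec v w) d * dotp (vec v w') d < 0} ->
  a \in D -> cross b a = 0 -> (size L <= size D)%N.
Proof.
move=> uL hb hsep aD hba.
pose phi w := count (fun d => 0 < dotp (vec v w) d * cross b d) D.
have phiD w : (phi w < size D)%N.
  rewrite -count_predT; apply: count_lt => //.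
  by exists a => //=; rewrite hba mulr0 ltxx.
have lt_phi w w' d : w \in L -> w' \in L -> d \in D ->
    0 < cross (vec v w) (vec v w') ->
    dotp (vec v w) d * dotp (vec v w') d < 0 -> (phi w < phi w')%N.
  move=> hw hw' hd hc hp; apply: count_lt.
    move=> d' _ /=; exact: L1 (hb _ hw) (hb _ hw') hc.
  by exists d => //; rewrite andbC; apply: L2 (hb _ hw) (hb _ hw') hc hp.
have inj : {in L &, injective phi}.
  move=> w w' hw hw' e; apply/eqP; apply: contraT => ne.
  have [d hd hp] := hsep w w' hw hw' ne.
  case: (ltgtP (cross (vec v w) (vec v w')) 0) => hc.
  - have hc' : 0 < cross (vec v w') (vec v w) by move: hc; rewrite /cross; lra.
    rewrite mulrC in hp.
    by have := lt_phi w' w d hw' hw hd hc' hp; rewrite e ltnn.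
  - by have := lt_phi w w' d hw hw' hd hc hp; rewrite e ltnn.
  - by case: (@L3 _ _ _ d (hb _ hw) (hb _ hw') hc hp).
rewrite -(size_map phi) -(size_iota 0 (size D)).
apply: uniq_leq_size; first by rewrite map_inj_in_uniq.
by move=> x /mapP [w _ ->]; rewrite mem_iota add0n phiD.
Qed.

End S.
Arguments vec {R}.
Arguments cross {R}.

Theorem lemma3 (R : realFieldType) (S : seq (pt R)) (D : seq (pt R)) (k : nat)
  (E : rel (pt R)) :
  uniq S -> uniq D -> size D = k ->
  (forall d, d \in D -> is_direction d) ->
  pairwise_non_opposite D ->
  D_general_position D S ->
  D_monotone_tree D S E ->
  forall v, v \in S -> (degree S E v <= 2 * k)%N.
Proof.
move=> uS uD <- _ _ hgp [[[hES hsym hirr] _ _] hmon] v vS.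
rewrite /degree -size_filter.
set N := filter (E v) S.
have hN w : w \in N -> [/\ w \in S, E v w & w != v].
  rewrite mem_filter => /andP [hw hs]; split => //.
  by apply: contraTneq hw => ->; rewrite (negbTE (hirr v)).
have uN : uniq N by apply: filter_uniq.
case eN: N => [|w0 N']; first by [].
rewrite -eN.
have w0N : w0 \in N by rewrite eN mem_head.
have [w0S vw0 w0v] := hN _ w0N.
have [a aD _] : exists2 a, a \in D & d_monotone a [:: v; w0].
  apply: (hmon v w0 vS w0S); first by rewrite eq_sym.
  split => //=; first by rewrite vw0.
  by rewrite inE eq_sym w0v.
have sep : {in N &, forall w w' : pt R, w != w' ->
    exists2 d, d \in D & dotp (vec v w) d * dotp (vec v w') d < 0}.
  move=> w w' hw hw' ne.
  have [wS vw wv] := hN _ hw; have [w'S vw' w'v] := hN _ hw'.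
  have [d dD [_ hs]] : exists2 d, d \in D & d_monotone d [:: w; v; w'].
    apply: (hmon w w' wS w'S ne).
    split => //=; first by rewrite -hsym vw vw'.
    by rewrite !inE negb_or wv ne eq_sym w'v.
  exists d => //; rewrite !dot_vec.
  move: hs => /= [/andP [h1 /andP [h2 _]] | /andP [h1 /andP [h2 _]]].
  - have h : 0 < dotp w' d - dotp v d by lra.
    by rewrite (pmulr_llt0 _ h); lra.
  - have h : dotp w' d - dotp v d < 0 by lra.
    by rewrite (nmulr_llt0 _ h); lra.
have nz w : w \in N -> dotp (vec v w) a != 0.
  move=> hw; have [wS _ wv] := hN _ hw.
  rewrite dot_vec subr_eq0; apply/negP => /eqP e.
  by move/eqP: wv; apply; apply: (hgp a aD w v wS vS e).
pose na : pt R := (- a.1, - a.2).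
pose P := fun w => 0 < dotp (vec v w) a.
pose Q := fun w => 0 < dotp (vec v w) na.
have split_size : size N = (count P N + count Q N)%N.
  rewrite -(count_predC P N); congr (_ + _)%N; apply: eq_in_count => w hw.
  have := nz w hw; rewrite /P /Q /= /dotp /na /=.
  set x := (vec v w).1 * a.1 + (vec v w).2 * a.2.
  have -> : (vec v w).1 * - a.1 + (vec v w).2 * - a.2 = - x by rewrite /x; ring.
  rewrite oppr_gt0 -leNgt le_eqVlt => /negbTE ->. by [].
rewrite split_size mul2n -addnn -!size_filter.
apply: leq_add.
- apply: (@half R v a a D).
  + by apply: filter_uniq.
  + by move=> w; rewrite mem_filter => /andP [].
  + move=> w w' hw hw'; apply: sep; [move: hw | move: hw']; by rewrite mem_filter => /andP [].
  + exact: aD.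
  + by rewrite /cross; ring.
- apply: (@half R v na a D).
  + by apply: filter_uniq.
  + by move=> w; rewrite mem_filter => /andP [].
  + move=> w w' hw hw'; apply: sep; [move: hw | move: hw']; by rewrite mem_filter => /andP [].
  + exact: aD.
  + by rewrite /cross /na /=; ring.
Qed.
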